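(* Let $\overline{\mathbf{C}}=(\mathbf{C},\perp)$ be an orthogonal category, $W\subseteq\mathrm{Mor}\,\mathbf{C}$ a subset of morphisms, $L:\mathbf{C}\to\mathbf{C}[W^{-1}]$ the localization functor, and $\overline{\mathbf{C}[W^{-1}]}=(\mathbf{C}[W^{-1}],\perp_W)$. Then the pullback functor $L^\ast=(-)\circ L:\mathbf{Alg}_{\mathsf{As}}(\mathbf{M})^{\mathbf{C}[W^{-1}]}\to\mathbf{Alg}_{\mathsf{As}}(\mathbf{M})^{\mathbf{C}}$ restricts to an equivalence of categories $$L^\ast:\mathbf{QFT}(\overline{\mathbf{C}[W^{-1}]})\xrightarrow{\ \sim\ }\mathbf{QFT}(\overline{\mathbf{C}})^{W\text{-}\mathrm{const}}.$$
   Context: An orthogonal category $\overline{\mathbf{C}}=(\mathbf{C},\perp)$ is a small category $\mathbf{C}$ together with a set $\perp$ of pairs of morphisms of $\mathbf{C}$ with common target such that (symmetry) $(f_1,f_2)\in\perp$ implies $(f_2,f_1)\in\perp$, and ($\circ$-stability) $(f_1,f_2)\in\perp$ implies $(g f_1 h_1, g f_2 h_2)\in\perp$ for all composable morphisms $g,h_1,h_2$. We write $f_1\perp f_2$ for $(f_1,f_2)\in\perp$. An orthogonal functor $F:\overline{\mathbf{C}}\to\overline{\mathbf{D}}$ is a functor $F:\mathbf{C}\to\mathbf{D}$ with $F(f_1)\perp_{\mathbf{D}}F(f_2)$ whenever $f_1\perp_{\mathbf{C}}f_2$. Fix a bicomplete closed symmetric monoidal category $(\mathbf{M},\otimes,I)$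 and let $\mathbf{Alg}_{\mathsf{As}}(\mathbf{M})$ be the category of associative unital algebras (monoids) in $\mathbf{M}$. An $\mathbf{M}$-valued AQFT on $\overline{\mathbf{C}}$ is a functor $\mathfrak{A}:\mathbf{C}\to\mathbf{Alg}_{\mathsf{As}}(\mathbf{M})$ such that for all $(f_1:c_1\to c)\perp(f_2:c_2\to c)$ one has $\mu_c\circ(\mathfrak{A}(f_1)\otimes\mathfrak{A}(f_2))=\mu_c^{\mathrm{op}}\circ(\mathfrak{A}(f_1)\otimes\mathfrak{A}(f_2))$ as morphisms $\mathfrak{A}(c_1)\otimes\mathfrak{A}(c_2)\to\mathfrak{A}(c)$, where $\mu_c$ is the multiplication of $\mathfrak{A}(c)$ and $\mu_c^{\mathrm{op}}=\mu_c\circ\tau$ with $\tau$ the symmetry isomorphism. $\mathbf{QFT}(\overline{\mathbf{C}})$ denotes the full subcategory of the functor category $\mathbf{Alg}_{\mathsf{As}}(\mathbf{M})^{\mathbf{C}}$ on such functors. For $W\subseteq \mathrm{Mor}\,\mathbf{C}$, $\mathbf{C}[W^{-1}]$ is the localization of $\mathbf{C}$ at $W$ with localization functor $L$, and $\perp_W$ is the smallest orthogonality relation on $\mathbf{C}[W^{-1}]$ with $L(f_1)\perp_W L(f_2)$ for all $f_1\perp f_2$ (so $L$ is orthogonal). $\mathbf{QFT}(\overline{\mathbf{C}})^{W\text{-}\mathrm{const}}$ is the full subcategory of those $\mathfrak{A}\in\mathbf{QFT}(\overline{\mathbf{C}})$ such that $\mathfrak{A}(f)$ is an isomorphism for all $f\in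 W$. *)

(* Defs.v *)
From Stdlib Require Import ProofIrrelevance.

Set Implicit Arguments.
Unset Strict Implicit.

Record Category := {
  Obj :> Type;
  Hom : Obj -> Obj -> Type;
  idm : forall a, Hom a a;
  comp : forall a b c, Hom b c -> Hom a b -> Hom a c;
  comp_id_l : forall a b (f : Hom a b), comp (idm b) f = f;
  comp_id_r : forall a b (f : Hom a b), comp f (idm a) = f;
  comp_assoc : forall a b c d (f : Hom a b) (g : Hom b c) (h : Hom c d),
      comp h (comp g f) = comp (comp h g) f
}.
Arguments Hom {c0} a b.
Arguments idm {c0} a.
Arguments comp {c0 a b c} g f.
Notation "g ∘ f" := (comp g f) (at level 40, left associativity).

Definition is_iso {C : Category} {a b : C} (f : Hom a b) : Prop :=
  exists g : Hom b a, g ∘ f = idm a /\ f ∘ g = idm b.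

Definition bijective {X Y : Type} (e : X -> Y) : Prop :=
  exists e' : Y -> X, (forall x, e' (e x) = x) /\ (forall y, e (e' y) = y).

Definition is_small (J : Category) : Prop :=
  (exists (O : Set) (e : O -> Obj J), bijective e) /\
  (forall a b : J, exists (H : Set) (h : H -> Hom a b), bijective h).

Record Functor (C D : Category) := {
  fobj :> C -> D;
  fmap : forall a b, Hom a b -> Hom (fobj a) (fobj b);
  fmap_id : forall a, fmap (idm a) = idm (fobj a);
  fmap_comp : forall a b c (f : Hom a b) (g : Hom b c),
      fmap (g ∘ f) = fmap g ∘ fmap f
}.
Arguments fmap {C D} f0 {a b} f.

Record NatTrans {C D : Category} (F G : Functor C D) := {
  ntc :> forall a, Hom (F a) (G a);
  ntnat : forall a b (f : Hom a b), fmap G f ∘ ntc a = ntc b ∘ fmap F f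
}.

Definition NatIso {C D : Category} (F G : Functor C D) : Prop :=
  exists alpha : NatTrans F G, forall a, is_iso (alpha a).

Definition FComp {C D E : Category} (G : Functor D E) (F : Functor C D)
  : Functor C E.
Proof.
  refine {| fobj := fun a => G (F a);
            fmap := fun a b f => fmap G (fmap F f) |}.
  - intro a. rewrite !fmap_id. reflexivity.
  - intros a b c f g. rewrite !fmap_comp. reflexivity.
Defined.

Definition IsLimitCone {J M : Category} (Dg : Functor J M) (X : M)
  (p : forall j, Hom X (Dg j)) : Prop :=
  (forall j k (u : Hom j k), fmap Dg u ∘ p j = p k) /\
  (forall (Y : M) (q : forall j, Hom Y (Dg j)),
      (forall j k (u : Hom j k), fmap Dg u ∘ q j = q k) ->
      exists! h : Hom Y X, forall j, p j ∘ h = q j).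

Definition IsColimitCocone {J M : Category} (Dg : Functor J M) (X : M)
  (p : forall j, Hom (Dg j) X) : Prop :=
  (forall j k (u : Hom j k), p k ∘ fmap Dg u = p j) /\
  (forall (Y : M) (q : forall j, Hom (Dg j) Y),
      (forall j k (u : Hom j k), q k ∘ fmap Dg u = q j) ->
      exists! h : Hom X Y, forall j, h ∘ p j = q j).

Definition Bicomplete (M : Category) : Prop :=
  (forall J : Category, is_small J -> forall Dg : Functor J M,
      exists (X : M) (p : forall j, Hom X (Dg j)), @IsLimitCone _ _ Dg X p) /\
  (forall J : Category, is_small J -> forall Dg : Functor J M,
      exists (X : M) (p : forall j, Hom (Dg j) X), @IsColimitCocone _ _ Dg X p).

Record MonStruct (M : Category) := {
  tens : M -> M -> M;
  tensm : forall a a' b b', Hom a a' -> Hom b b' -> Hom (tens a b) (tens a' b');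
  munitob : M;
  assoc : forall a b c, Hom (tens (tens a b) c) (tens a (tens b c));
  assoc_inv : forall a b c, Hom (tens a (tens b c)) (tens (tens a b) c);
  lunit : forall a, Hom (tens munitob a) a;
  lunit_inv : forall a, Hom a (tens munitob a);
  runit : forall a, Hom (tens a munitob) a;
  runit_inv : forall a, Hom a (tens a munitob);
  braid : forall a b, Hom (tens a b) (tens b a)
}.
Arguments tens {M} m a b.
Arguments tensm {M} m {a a' b b'} f g.
Arguments munitob {M} m.
Arguments assoc {M} m a b c.
Arguments assoc_inv {M} m a b c.
Arguments lunit {M} m a.
Arguments lunit_inv {M} m a.
Arguments runit {M} m a.
Arguments runit_inv {M} m a.
Arguments braid {M} m a b.

Definition SymMonLaws (M : Category) (S : MonStruct M) : Prop :=
  let T := tens S in let Tm := @tensm M S in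
  (forall a b, Tm _ _ _ _ (idm a) (idm b) = idm (T a b)) /\
  (forall a a' a'' b b' b'' (f : Hom a a') (f' : Hom a' a'')
          (g : Hom b b') (g' : Hom b' b''),
      Tm _ _ _ _ (f' ∘ f) (g' ∘ g) = Tm _ _ _ _ f' g' ∘ Tm _ _ _ _ f g) /\
  (forall a b c, assoc_inv S a b c ∘ assoc S a b c = idm _ /\
                 assoc S a b c ∘ assoc_inv S a b c = idm _) /\
  (forall a a' b b' c c' (f : Hom a a') (g : Hom b b') (h : Hom c c'),
      Tm _ _ _ _ f (Tm _ _ _ _ g h) ∘ assoc S a b c
      = assoc S a' b' c' ∘ Tm _ _ _ _ (Tm _ _ _ _ f g) h) /\
  (forall a, lunit_inv S a ∘ lunit S a = idm _ /\ lunit S a ∘ lunit_inv S a = idm _) /\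
  (forall a a' (f : Hom a a'), f ∘ lunit S a = lunit S a' ∘ Tm _ _ _ _ (idm _) f) /\
  (forall a, runit_inv S a ∘ runit S a = idm _ /\ runit S a ∘ runit_inv S a = idm _) /\
  (forall a a' (f : Hom a a'), f ∘ runit S a = runit S a' ∘ Tm _ _ _ _ f (idm _)) /\
  (forall a b c d,
      Tm _ _ _ _ (idm a) (assoc S b c d) ∘ assoc S a (T b c) d
        ∘ Tm _ _ _ _ (assoc S a b c) (idm d)
      = assoc S a b (T c d) ∘ assoc S (T a b) c d) /\
  (forall a b, Tm _ _ _ _ (idm a) (lunit S b) ∘ assoc S a (munitob S) b
               = Tm _ _ _ _ (runit S a) (idm b)) /\
  (forall a a' b b' (f : Hom a a') (g : Hom b b'),
      Tm _ _ _ _ g f ∘ braid S a b = braid S a' b' ∘ Tm _ _ _ _ f g) /\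
  (forall a b, braid S b a ∘ braid S a b = idm _) /\
  (forall a b c,
      assoc S b c a ∘ braid S a (T b c) ∘ assoc S a b c
      = Tm _ _ _ _ (idm b) (braid S a c) ∘ assoc S b a c
          ∘ Tm _ _ _ _ (braid S a b) (idm c)).

Record SymMonCat := {
  smc_cat :> Category;
  smc_str : MonStruct smc_cat;
  smc_laws : SymMonLaws smc_str
}.

Notation "a ⊗o b" := (tens (smc_str _) a b) (at level 35).
Notation "f ⊗ g" := (tensm (smc_str _) f g) (at level 35).

(* closed: every functor (- ⊗ b) has a right adjoint (universal arrows) *)
Definition Closed (M : SymMonCat) : Prop :=
  forall b c : M, exists (H : M) (ev : Hom (H ⊗o b) c),
    forall (a : M) (f : Hom (a ⊗o b) c),
      exists! g : Hom a H, ev ∘ (g ⊗ idm b) = f.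

Record Monoid (M : SymMonCat) := {
  mob : M;
  mmul : Hom (mob ⊗o mob) mob;
  munit : Hom (munitob (smc_str M)) mob;
  massoc : mmul ∘ (mmul ⊗ idm mob)
           = mmul ∘ (idm mob ⊗ mmul) ∘ assoc (smc_str M) mob mob mob;
  mlunit : mmul ∘ (munit ⊗ idm mob) = lunit (smc_str M) mob;
  mrunit : mmul ∘ (idm mob ⊗ munit) = runit (smc_str M) mob
}.

Definition MonHom {M : SymMonCat} (A B : Monoid M) (phi : Hom (mob A) (mob B))
  : Prop :=
  phi ∘ mmul A = mmul B ∘ (phi ⊗ phi) /\ phi ∘ munit A = munit B.
Arguments MonHom {M} A B phi.

Record AlgFun (C : Category) (M : SymMonCat) := {
  aob : C -> Monoid M;
  amap : forall a b, Hom a b -> Hom (mob (aob a)) (mob (aob b));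
  amap_hom : forall a b (f : Hom a b), MonHom (aob a) (aob b) (amap f);
  amap_id : forall a, amap (idm a) = idm _;
  amap_comp : forall a b c (f : Hom a b) (g : Hom b c),
      amap (g ∘ f) = amap g ∘ amap f
}.
Arguments amap {C M} a0 {a b} f.

Record AlgNat {C : Category} {M : SymMonCat} (A B : AlgFun C M) := {
  anc :> forall c, Hom (mob (aob A c)) (mob (aob B c));
  anc_hom : forall c, MonHom (aob A c) (aob B c) (anc c);
  anc_nat : forall a b (f : Hom a b), amap B f ∘ anc a = anc b ∘ amap A f
}.

Definition AlgIso {C : Category} {M : SymMonCat} (A B : AlgFun C M) : Prop :=
  exists (alpha : AlgNat A B) (beta : AlgNat B A),
    forall c, beta c ∘ alpha c = idm _ /\ alpha c ∘ beta c = idm _.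

Definition AlgPull {C D : Category} {M : SymMonCat} (L : Functor C D)
  (A : AlgFun D M) : AlgFun C M.
Proof.
  refine {| aob := fun c => aob A (L c);
            amap := fun a b f => amap A (fmap L f) |}.
  - intros a b f. apply amap_hom.
  - intro a. rewrite fmap_id. apply amap_id.
  - intros a b c f g. rewrite fmap_comp. apply amap_comp.
Defined.

Record OrthCat := {
  ocat :> Category;
  operp : forall c c1 c2 : ocat, Hom c1 c -> Hom c2 c -> Prop;
  operp_sym : forall c c1 c2 (f1 : Hom c1 c) (f2 : Hom c2 c),
      operp f1 f2 -> operp f2 f1;
  operp_comp : forall c c1 c2 (f1 : Hom c1 c) (f2 : Hom c2 c)
      d d1 d2 (g : Hom c d) (h1 : Hom d1 c1) (h2 : Hom d2 c2),
      operp f1 f2 -> operp (g ∘ f1 ∘ h1) (g ∘ f2 ∘ h2)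
}.
Arguments operp {o c c1 c2} f1 f2.

Definition isQFT {C : Category} {M : SymMonCat}
  (perp : forall c c1 c2 : C, Hom c1 c -> Hom c2 c -> Prop)
  (A : AlgFun C M) : Prop :=
  forall (c c1 c2 : C) (f1 : Hom c1 c) (f2 : Hom c2 c),
    perp c c1 c2 f1 f2 ->
    mmul (aob A c) ∘ (amap A f1 ⊗ amap A f2)
    = mmul (aob A c) ∘ braid (smc_str M) _ _ ∘ (amap A f1 ⊗ amap A f2).

Definition Wconst {C : Category} {M : SymMonCat}
  (W : forall a b : C, Hom a b -> Prop) (A : AlgFun C M) : Prop :=
  forall (a b : C) (f : Hom a b), W a b f ->
    exists g : Hom (mob (aob A b)) (mob (aob A a)),
      MonHom (aob A b) (aob A a) g /\ g ∘ amap A f = idm _ /\ amap A f ∘ g = idm _.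

(* L : C -> D is a localization of C at W (universal property, in the
   form of Kashiwara--Schapira, Def. 7.1.9) *)
Definition IsLocalization {C D : Category} (W : forall a b : C, Hom a b -> Prop)
  (L : Functor C D) : Prop :=
  (forall a b (f : Hom a b), W a b f -> is_iso (fmap L f)) /\
  (forall (E : Category) (F : Functor C E),
      (forall a b (f : Hom a b), W a b f -> is_iso (fmap F f)) ->
      exists G : Functor D E, NatIso (FComp G L) F) /\
  (forall (E : Category) (G G' : Functor D E),
      (forall alpha beta : NatTrans G G',
          (forall c, alpha (L c) = beta (L c)) -> forall d, alpha d = beta d) /\
      (forall gamma : NatTrans (FComp G L) (FComp G' L),
          exists alpha : NatTrans G G', forall c, alpha (L c) = gamma c)).

Inductive perpW {C : OrthCat} {D : Category} (L : Functor C D)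
  : forall d d1 d2 : D, Hom d1 d -> Hom d2 d -> Prop :=
| perpW_gen : forall (c c1 c2 : C) (f1 : Hom c1 c) (f2 : Hom c2 c),
    operp f1 f2 -> perpW L (fmap L f1) (fmap L f2)
| perpW_sym : forall d d1 d2 (g1 : Hom d1 d) (g2 : Hom d2 d),
    perpW L g1 g2 -> perpW L g2 g1
| perpW_comp : forall d d1 d2 (g1 : Hom d1 d) (g2 : Hom d2 d)
      e e1 e2 (k : Hom d e) (h1 : Hom e1 d1) (h2 : Hom e2 d2),
    perpW L g1 g2 -> perpW L (k ∘ g1 ∘ h1) (k ∘ g2 ∘ h2).
Arguments perpW {C D} L d d1 d2 _ _.

(* "L^* restricts to an equivalence between the full subcategory of
   Alg_As(M)^D on P and the full subcategory of Alg_As(M)^C on Q":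
   it lands in Q, is fully faithful, and is essentially surjective. *)
Definition PullbackRestrictsToEquivalence {C D : Category} {M : SymMonCat}
  (L : Functor C D) (P : AlgFun D M -> Prop) (Q : AlgFun C M -> Prop) : Prop :=
  (forall A, P A -> Q (AlgPull L A)) /\
  (forall A B, P A -> P B -> forall alpha beta : AlgNat A B,
      (forall c, alpha (L c) = beta (L c)) -> forall d, alpha d = beta d) /\
  (forall A B, P A -> P B ->
      forall gamma : AlgNat (AlgPull L A) (AlgPull L B),
        exists alpha : AlgNat A B, forall c, alpha (L c) = gamma c) /\
  (forall B, Q B -> exists A, P A /\ AlgIso (AlgPull L A) B).

(* Main.v *)
Require Import Defs.
From Stdlib Require Import ProofIrrelevance IndefiniteDescription.

Section Aux.
Variable M : SymMonCat.

Lemma tens_id (a b : M) : idm a ⊗ idm b = idm (a ⊗o b).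
Proof. destruct (smc_laws M) as [H _]. apply H. Qed.

Lemma tens_comp (a a' a'' b b' b'' : M) (f : Hom a a') (f' : Hom a' a'')
  (g : Hom b b') (g' : Hom b' b'') : (f' ∘ f) ⊗ (g' ∘ g) = (f' ⊗ g') ∘ (f ⊗ g).
Proof. destruct (smc_laws M) as [_ [H _]]. apply H. Qed.

Lemma braid_nat (a a' b b' : M) (f : Hom a a') (g : Hom b b') :
  (g ⊗ f) ∘ braid (smc_str M) a b = braid (smc_str M) a' b' ∘ (f ⊗ g).
Proof. destruct (smc_laws M) as (_&_&_&_&_&_&_&_&_&_&H&_). apply H. Qed.

Lemma braid_inv (a b : M) :
  braid (smc_str M) b a ∘ braid (smc_str M) a b = idm _.
Proof. destruct (smc_laws M) as (_&_&_&_&_&_&_&_&_&_&_&H&_). apply H. Qed.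

Lemma sig_eq {A} (P : A -> Prop) (x y : {a | P a}) : proj1_sig x = proj1_sig y -> x = y.
Proof. destruct x, y; simpl; intros ->. f_equal. apply proof_irrelevance. Qed.

Definition AlgHom (A B : Monoid M) := {phi | MonHom A B phi}.

Lemma monhom_id (A : Monoid M) : MonHom A A (idm _).
Proof. split; rewrite ?tens_id, comp_id_l, ?comp_id_r; reflexivity. Qed.

Lemma monhom_comp {A B E : Monoid M} {g f} :
  MonHom B E g -> MonHom A B f -> MonHom A E (g ∘ f).
Proof.
  intros [Hg1 Hg2] [Hf1 Hf2]; split.
  - rewrite tens_comp, comp_assoc, <- Hg1, <- (comp_assoc (f ⊗ f)), <- Hf1, comp_assoc. reflexivity.
  - rewrite <- comp_assoc, Hf2, Hg2. reflexivity.
Qed.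

Definition AlgCat : Category.
Proof.
  refine {| Obj := Monoid M; Hom := AlgHom;
            idm := fun a => exist _ (idm _) (monhom_id a);
            comp := fun a b c g f => exist _ (proj1_sig g ∘ proj1_sig f)
                      (monhom_comp (proj2_sig g) (proj2_sig f)) |}.
  - intros; apply sig_eq; simpl; apply comp_id_l.
  - intros; apply sig_eq; simpl; apply comp_id_r.
  - intros; apply sig_eq; simpl; apply comp_assoc.
Defined.

Definition toF {C : Category} (A : AlgFun C M) : Functor C AlgCat.
Proof.
  refine {| fobj := fun c => aob A c : Obj AlgCat;
            fmap := fun a b f => exist _ (amap A f) (amap_hom A f) |}.
  - intros; apply sig_eq; simpl; apply amap_id.
  - intros; apply sig_eq; simpl; apply amap_comp.
Defined.

Definition toNT {C : Category} (A B : AlgFun C M) (alpha : AlgNat A B)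
  : NatTrans (toF A) (toF B).
Proof.
  refine (@Build_NatTrans C AlgCat (toF A) (toF B) (fun c => exist _ (alpha c) (anc_hom alpha c)) _).
  intros; apply sig_eq; simpl; apply anc_nat.
Defined.

Lemma qft_lemma (X Y : Monoid M) (psi : Hom (mob Y) (mob X)) (Hpsi : MonHom Y X psi)
  (a b a' b' : M) (u1 : Hom a (mob Y)) (u2 : Hom b (mob Y)) (v1 : Hom a' a) (v2 : Hom b' b) :
  mmul Y ∘ (u1 ⊗ u2) = mmul Y ∘ braid (smc_str M) _ _ ∘ (u1 ⊗ u2) ->
  mmul X ∘ ((psi ∘ u1 ∘ v1) ⊗ (psi ∘ u2 ∘ v2))
  = mmul X ∘ braid (smc_str M) _ _ ∘ ((psi ∘ u1 ∘ v1) ⊗ (psi ∘ u2 ∘ v2)).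
Proof.
  intro H. destruct Hpsi as [Hm _].
  rewrite !tens_comp, !comp_assoc.
  rewrite <- (comp_assoc (psi ⊗ psi) (braid (smc_str M) _ _) (mmul X)).
  rewrite <- (braid_nat _ _ _ _ psi psi).
  rewrite !comp_assoc, <- Hm.
  rewrite <- (comp_assoc (u1 ⊗ u2) (mmul Y) psi), H.
  rewrite !comp_assoc. reflexivity.
Qed.

Lemma qft_sym (X : Monoid M) (a b : M) (g1 : Hom a (mob X)) (g2 : Hom b (mob X)) :
  mmul X ∘ (g1 ⊗ g2) = mmul X ∘ braid (smc_str M) _ _ ∘ (g1 ⊗ g2) ->
  mmul X ∘ (g2 ⊗ g1) = mmul X ∘ braid (smc_str M) _ _ ∘ (g2 ⊗ g1).
Proof.
  intro H.
  rewrite <- comp_assoc, <- (braid_nat _ _ _ _ g2 g1), comp_assoc, H.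
  rewrite <- (comp_assoc (g1 ⊗ g2)).
  rewrite <- (braid_nat _ _ _ _ g1 g2).
  rewrite <- !comp_assoc, braid_inv, comp_id_r. reflexivity.
Qed.

End Aux.
Arguments toF {M C} A.
Arguments toNT {M C A B} alpha.
Arguments qft_lemma {M X Y psi} Hpsi {a b a' b' u1 u2 v1 v2}.
Arguments qft_sym {M X a b g1 g2}.
Arguments sig_eq {A P x y}.

Lemma nat_inverse (C D : Category) (F G : Functor C D) (alpha : NatTrans F G)
  (Hi : forall a, is_iso (alpha a)) :
  exists beta : NatTrans G F, forall a, beta a ∘ alpha a = idm _ /\ alpha a ∘ beta a = idm _.
Proof.
  pose (inv := fun a => constructive_indefinite_description _ (Hi a)).
  assert (Hb : forall a b (f : Hom a b),
    fmap F f ∘ proj1_sig (inv a) = proj1_sig (inv b) ∘ fmap G f).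
  { intros a b f. destruct (inv a) as [ia [Ha1 Ha2]], (inv b) as [ib [Hb1 Hb2]]; simpl.
    rewrite <- (comp_id_l (fmap F f ∘ ia)), <- Hb1.
    rewrite <- !comp_assoc, (comp_assoc ia (fmap F f) (alpha b)), <- ntnat.
    rewrite <- comp_assoc, Ha2, comp_id_r. reflexivity. }
  exists {| ntc := fun a => proj1_sig (inv a); ntnat := Hb |}.
  intro a; simpl. destruct (inv a) as [ia [H1 H2]]; simpl. auto.
Qed.

Theorem proposition2p5 (M : SymMonCat) (M_bicomplete : Bicomplete M)
  (M_closed : Closed M) (C : OrthCat) (C_small : is_small C)
  (W : forall a b : C, Hom a b -> Prop)
  (D : Category) (L : Functor C D) (HL : IsLocalization W L) :
  PullbackRestrictsToEquivalence (M := M) L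
    (fun A => isQFT (perpW L) A)
    (fun A => isQFT (@operp C) A /\ Wconst W A).
Proof.
  destruct HL as (HLW & HLex & HLff).
  split; [|split; [|split]].
  - intros A HA. split.
    + intros c c1 c2 f1 f2 H. exact (HA _ _ _ _ _ (perpW_gen L H)).
    + intros a b f Hf. destruct (HLW a b f Hf) as [g [H1 H2]].
      simpl. exists (amap A g). split; [apply amap_hom|].
      rewrite <- !amap_comp, H1, H2, !amap_id. auto.
  - intros A B _ _ alpha beta H d.
    destruct (HLff (AlgCat M) (toF A) (toF B)) as [Hf _].
    pose proof (Hf (toNT alpha) (toNT beta)) as E.
    assert (E' : toNT alpha d = toNT beta d).
    { apply E. intro c. apply sig_eq. apply H. }
    exact (f_equal (@proj1_sig _ _) E').
  - intros A B _ _ gamma.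
    destruct (HLff (AlgCat M) (toF A) (toF B)) as [_ Hf].
    assert (Hg : forall a b (f : Hom a b),
      fmap (FComp (toF B) L) f ∘ (exist _ (gamma a) (anc_hom gamma a) : @Hom (AlgCat M) _ _)
      = (exist _ (gamma b) (anc_hom gamma b) : @Hom (AlgCat M) _ _) ∘ fmap (FComp (toF A) L) f).
    { intros; apply sig_eq; simpl. exact (anc_nat gamma f). }
    destruct (Hf (@Build_NatTrans C (AlgCat M) (FComp (toF A) L) (FComp (toF B) L) (fun c => exist _ (gamma c) (anc_hom gamma c)) Hg)) as [alpha Ha].
    assert (Hn : forall a b (f : Hom a b),
      amap B f ∘ proj1_sig (alpha a) = proj1_sig (alpha b) ∘ amap A f).
    { intros a b f. exact (f_equal (@proj1_sig _ _) (ntnat alpha f)). }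
    exists (@Build_AlgNat D M A B (fun d => proj1_sig (alpha d)) (fun d => proj2_sig (alpha d)) Hn).
    intro c; simpl. rewrite Ha. reflexivity.
  - intros B [HB HW].
    assert (Hiso : forall a b (f : Hom a b), W a b f -> is_iso (fmap (toF B) f)).
    { intros a b f Hf. destruct (HW a b f Hf) as [g [Hg [H1 H2]]].
      exists (exist _ g Hg : @Hom (AlgCat M) _ _). split; apply sig_eq; simpl; assumption. }
    destruct (HLex (AlgCat M) (toF B) Hiso) as [G [alpha Halpha]].
    destruct (@nat_inverse _ _ _ _ alpha Halpha) as [beta Hbeta].
    unshelve eset (A := {| aob := fun d => fobj G d;
                   amap := fun a b f => proj1_sig (fmap G f) |} : AlgFun D M).
    + intros a b f. exact (proj2_sig (fmap G f)).
    + intro a. exact (f_equal (@proj1_sig _ _) (fmap_id G a)).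
    + intros a b c f g. exact (f_equal (@proj1_sig _ _) (fmap_comp G f g)).
    + exists A. split.
      * intros d d1 d2 g1 g2 Hp. induction Hp as
          [c c1 c2 f1 f2 Ho | d d1 d2 g1 g2 Hp IH | d d1 d2 g1 g2 e e1 e2 k h1 h2 Hp IH].
        -- assert (Hrep : forall a b (f : Hom a b),
              amap A (fmap L f) = proj1_sig (beta b) ∘ amap B f ∘ proj1_sig (alpha a)).
           { intros a b f. simpl.
             pose proof (f_equal (@proj1_sig _ _) (ntnat alpha f)) as N. simpl in N.
             destruct (Hbeta b) as [Hb1 _].
             pose proof (f_equal (@proj1_sig _ _) Hb1) as Hb. simpl in Hb.
             rewrite <- comp_assoc, N, comp_assoc, Hb, comp_id_l. reflexivity. }
           rewrite !Hrep. apply qft_lemma.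
           ++ exact (proj2_sig (beta c)).
           ++ exact (HB _ _ _ _ _ Ho).
        -- apply qft_sym. exact IH.
        -- change (amap A (k ∘ g1 ∘ h1)) with (amap A ((k ∘ g1) ∘ h1)).
           rewrite !amap_comp. apply qft_lemma; [apply amap_hom|exact IH].
      * unshelve eexists (@Build_AlgNat C M (AlgPull L A) B (fun c => proj1_sig (alpha c)) _ _).
        { intro c. exact (proj2_sig (alpha c)). }
        { intros a b f. exact (f_equal (@proj1_sig _ _) (ntnat alpha f)). }
        unshelve eexists (@Build_AlgNat C M B (AlgPull L A) (fun c => proj1_sig (beta c)) _ _).
        { intro c. exact (proj2_sig (beta c)). }
        { intros a b f. exact (f_equal (@proj1_sig _ _) (ntnat beta f)). }
        intro c; simpl. destruct (Hbeta c) as [H1 H2].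
        split; [exact (f_equal (@proj1_sig _ _) H1) | exact (f_equal (@proj1_sig _ _) H2)].
Qed.
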